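(* Let $H_0$ satisfy TQO-1 and TQO-2 with parameter $L^*$. Fix an integer $1\le r\le L^*$ and operators $V_{r,A}$, $A\in\mathcal S(r)$, each Hermitian and supported on $A$, with $V_{r,A}P=PV_{r,A}=0$ and $\|V_{r,A}\|\le w$. Let $W(r)=\sum_{A\in\mathcal S(r)}V_{r,A}$. Then there is a constant $C$ independent of $L$, $r$ and $w$ such that $$\|W(r)\psi\|\le C\,w\,r^2\,\|H_0\psi\|\quad\text{for all }\psi\in\mathcal H .$$
   Context: Lattice $\Lambda=\mathbb Z_L\times\mathbb Z_L$ (periodic), each site a qudit of fixed finite dimension, $\mathcal H=\bigotimes_u\mathcal H_u$. $\mathcal S(r)$: set of $r\times r$ square blocks. $H_0=\sum_{A\in\mathcal S(2)}Q_A$ with $Q_A$ pairwise commuting projectors supported on $A$; $P=\prod_{A\in\mathcal S(2)}(I-Q_A)\neq0$ is the ground-space projector (ground energy $0$). For $B\in\mathcal S(r)$: $P_B=\prod_{A\in\mathcal S(2),A\subseteq B}(I-Q_A)$, $Q_B=I-P_B$. TQO-1: for every $A\in\mathcal S(r)$, $r\le L^*$, and every $O_A$ supported on $A$, $PO_AP=cP$ for some $c\in\mathbb C$. TQO-2: for every $A\in\mathcal S(r)$, $r\le L^*$, with $B\in\mathcal S(r+2)$ the square containing $A$ and its nearest neighbours, $O_AP=0$ implies $O_AP_B=0$ for $O_A$ supported on $A$. *)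

(* Defs.v *)
(* Quantum spin system on the periodic L x L lattice,
   qudits of dimension d, scalars in an arbitrary numClosedFieldType K
   (e.g. algC); operators are represented as matrices indexed by
   configurations (computational basis of the tensor product). *)
From HB Require Import structures.
From mathcomp Require Import all_boot all_order all_algebra.
Set Implicit Arguments. Unset Strict Implicit. Unset Printing Implicit Defensive.
Import Order.TTheory GRing.Theory Num.Theory.
Local Open Scope ring_scope.

Section Lattice.
Variables L d : nat.

Definition site := ('I_L * 'I_L)%type.
Definition conf := {ffun site -> 'I_d}.

Definition block (r x y : nat) : {set site} :=
  [set s : site | [exists i : 'I_r, exists j : 'I_r,
     (nat_of_ord s.1 == (x + i) %% L)%N && (nat_of_ord s.2 == (y + j) %% L)%N]].

Definition squares (r : nat) : {set {set site}} :=
  [set block r (nat_of_ord c.1) (nat_of_ord c.2) | c : site].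

Definition agree_on (A : {set site}) (s t : conf) : bool :=
  [forall x in A, s x == t x].
Definition agree_off (A : {set site}) (s t : conf) : bool :=
  [forall x in ~: A, s x == t x].
End Lattice.

Notation vec K L d := {ffun conf L d -> K}.
Notation op K L d := {ffun (conf L d * conf L d) -> K}.

Section Operators.
Variables (K : numClosedFieldType) (L d : nat).
Local Notation vec := (vec K L d).
Local Notation op := (op K L d).

Definition app (O : op) (v : vec) : vec :=
  [ffun s => \sum_(u : conf L d) O (s, u) * v u].
Definition mulo (O1 O2 : op) : op :=
  [ffun p => \sum_(u : conf L d) O1 (p.1, u) * O2 (u, p.2)].
Definition scalo (c : K) (O : op) : op := [ffun p => c * O p].
Definition ido : op := [ffun p => ((p.1 == p.2)%:R : K)].

Definition vnorm (v : vec) : K := sqrtC (\sum_(s : conf L d) `|v s| ^+ 2).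
Definition opnorm_le (O : op) (w : K) : Prop :=
  forall v : vec, vnorm (app O v) <= w * vnorm v.

Definition herm_op (O : op) : Prop := forall s t, O (s, t) = (O (t, s))^*.
Definition proj_op (O : op) : Prop := herm_op O /\ mulo O O = O.

(* O = O_A (x) I_{Lambda \ A} *)
Definition supported_on (A : {set site L}) (O : op) : Prop :=
  exists g : conf L d -> conf L d -> K,
    (forall s t, O (s, t) = (agree_off A s t)%:R * g s t) /\
    (forall s s' t t', agree_on A s s' -> agree_on A t t' -> g s t = g s' t').

Variable Q : {set site L} -> op.

Definition H0 : op := \sum_(A in squares L 2) Q A.
Definition Pgs : op := \big[mulo/ido]_(A in squares L 2) (ido - Q A).
Definition PB (B : {set site L}) : op :=
  \big[mulo/ido]_(A in squares L 2 | A \subset B) (ido - Q A).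

Definition TQO1 (Lstar : nat) : Prop :=
  forall r : nat, (r <= Lstar)%N -> forall A, A \in squares L r ->
  forall O : op, supported_on A O -> exists c : K, mulo (mulo Pgs O) Pgs = scalo c Pgs.

(* A = square with corner c; B = the (r+2)-square with corner c - (1,1),
   i.e. A together with its nearest neighbours *)
Definition TQO2 (Lstar : nat) : Prop :=
  forall r : nat, (r <= Lstar)%N -> forall c : site L,
  forall O : op, supported_on (block L r c.1 c.2) O ->
  mulo O Pgs = 0 ->
  mulo O (PB (block L (r + 2) (c.1 + L - 1) (c.2 + L - 1))) = 0.
End Operators.

(* Main.v *)
Require Import Defs.
From HB Require Import structures.
From mathcomp Require Import all_boot all_order all_algebra.
From Stdlib Require Import Lia.
Set Implicit Arguments. Unset Strict Implicit. Unset Printing Implicit Defensive.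
Import Order.TTheory GRing.Theory Num.Theory.
Local Open Scope ring_scope.

Section OpAlg.
Variables (K : numClosedFieldType) (L d : nat).
Local Notation vec := (vec K L d).
Local Notation op := (op K L d).
Local Notation mulo := (@mulo K L d).
Local Notation app := (@app K L d).
Local Notation ido := (@ido K L d).

Lemma muloA (X Y Z : op) : mulo (mulo X Y) Z = mulo X (mulo Y Z).
Proof.
apply/ffunP => -[s t]; rewrite !ffunE /=.
under eq_bigr do rewrite ffunE big_distrl.
under [RHS]eq_bigr do rewrite ffunE big_distrr.
rewrite exchange_big; apply: eq_bigr => u _; apply: eq_bigr => v _ /=.
by rewrite mulrA.
Qed.

Lemma mulo1 (X : op) : mulo X ido = X.
Proof.
apply/ffunP => -[s t]; rewrite !ffunE /= (bigD1 t) //= ffunE eqxx mulr1 big1 ?addr0 //.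
by move=> u /negbTE ne; rewrite ffunE /= ne mulr0.
Qed.

Lemma mul1o (X : op) : mulo ido X = X.
Proof.
apply/ffunP => -[s t]; rewrite !ffunE /= (bigD1 s) //= ffunE eqxx mul1r big1 ?addr0 //.
by move=> u ne; rewrite ffunE /= eq_sym (negbTE ne) mul0r.
Qed.

Lemma muloDl (X Y Z : op) : mulo (X + Y) Z = mulo X Z + mulo Y Z.
Proof.
apply/ffunP => -[s t]; rewrite !ffunE /= -big_split; apply: eq_bigr => u _.
by rewrite ffunE mulrDl.
Qed.

Lemma muloDr (X Y Z : op) : mulo X (Y + Z) = mulo X Y + mulo X Z.
Proof.
apply/ffunP => -[s t]; rewrite !ffunE /= -big_split; apply: eq_bigr => u _.
by rewrite ffunE mulrDr.
Qed.

Lemma muloNl (X Y : op) : mulo (- X) Y = - mulo X Y.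
Proof.
apply/ffunP => -[s t]; rewrite !ffunE /= -sumrN; apply: eq_bigr => u _.
by rewrite ffunE mulNr.
Qed.

Lemma muloNr (X Y : op) : mulo X (- Y) = - mulo X Y.
Proof.
apply/ffunP => -[s t]; rewrite !ffunE /= -sumrN; apply: eq_bigr => u _.
by rewrite ffunE mulrN.
Qed.

Lemma muloBl (X Y Z : op) : mulo (X - Y) Z = mulo X Z - mulo Y Z.
Proof. by rewrite muloDl muloNl. Qed.
Lemma muloBr (X Y Z : op) : mulo X (Y - Z) = mulo X Y - mulo X Z.
Proof. by rewrite muloDr muloNr. Qed.

Lemma mul0o (X : op) : mulo 0 X = 0.
Proof. by apply/ffunP => -[s t]; rewrite !ffunE big1 // => u _; rewrite ffunE mul0r. Qed.
Lemma mulo0 (X : op) : mulo X 0 = 0.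
Proof. by apply/ffunP => -[s t]; rewrite !ffunE big1 // => u _; rewrite ffunE mulr0. Qed.

Lemma muloMnl n (X Y : op) : mulo (X *+ n) Y = mulo X Y *+ n.
Proof. by elim: n => [|n IH]; rewrite ?mulr0n ?mul0o // !mulrS muloDl IH. Qed.
Lemma muloMnr n (X Y : op) : mulo X (Y *+ n) = mulo X Y *+ n.
Proof. by elim: n => [|n IH]; rewrite ?mulr0n ?mulo0 // !mulrS muloDr IH. Qed.

Lemma mulo_suml I (r : seq I) (P : pred I) (F : I -> op) (Y : op) :
  mulo (\sum_(i <- r | P i) F i) Y = \sum_(i <- r | P i) mulo (F i) Y.
Proof.
elim/big_rec2: _ => [|i a b Pi <-]; first by rewrite mul0o.
by rewrite muloDl.
Qed.
Lemma mulo_sumr I (r : seq I) (P : pred I) (F : I -> op) (Y : op) :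
  mulo Y (\sum_(i <- r | P i) F i) = \sum_(i <- r | P i) mulo Y (F i).
Proof.
elim/big_rec2: _ => [|i a b Pi <-]; first by rewrite mulo0.
by rewrite muloDr.
Qed.

Lemma app_mulo (X Y : op) v : app (mulo X Y) v = app X (app Y v).
Proof.
apply/ffunP => s; rewrite !ffunE.
under eq_bigr do rewrite ffunE big_distrl.
under [RHS]eq_bigr do rewrite ffunE big_distrr.
rewrite exchange_big; apply: eq_bigr => u _; apply: eq_bigr => v' _ /=.
by rewrite mulrA.
Qed.

Lemma appD (X Y : op) v : app (X + Y) v = app X v + app Y v.
Proof.
by apply/ffunP => s; rewrite !ffunE -big_split; apply: eq_bigr => u _; rewrite ffunE mulrDl.
Qed.
Lemma app0 v : app 0 v = 0.
Proof. by apply/ffunP => s; rewrite !ffunE big1 // => u _; rewrite ffunE mul0r. Qed.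
Lemma appN (X : op) v : app (- X) v = - app X v.
Proof.
by apply/ffunP => s; rewrite !ffunE -sumrN; apply: eq_bigr => u _; rewrite ffunE mulNr.
Qed.
Lemma appMn n (X : op) v : app (X *+ n) v = app X v *+ n.
Proof. by elim: n => [|n IH]; rewrite ?mulr0n ?app0 // !mulrS appD IH. Qed.
Lemma app_sum I (r : seq I) (P : pred I) (F : I -> op) v :
  app (\sum_(i <- r | P i) F i) v = \sum_(i <- r | P i) app (F i) v.
Proof.
elim/big_rec2: _ => [|i a b Pi <-]; first by rewrite app0.
by rewrite appD.
Qed.
Lemma app1 v : app ido v = v.
Proof.
apply/ffunP => s; rewrite !ffunE (bigD1 s) //= ffunE eqxx mul1r big1 ?addr0 //.
by move=> u ne; rewrite ffunE /= eq_sym (negbTE ne) mul0r.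
Qed.

Definition ip (u v : vec) : K := \sum_s (u s)^* * v s.

Lemma ipDr u v w : ip u (v + w) = ip u v + ip u w.
Proof. by rewrite /ip -big_split; apply: eq_bigr => s _; rewrite ffunE mulrDr. Qed.
Lemma ipNr u v : ip u (- v) = - ip u v.
Proof. by rewrite /ip -sumrN; apply: eq_bigr => s _; rewrite ffunE mulrN. Qed.
Lemma ip0r u : ip u 0 = 0.
Proof. by rewrite /ip big1 // => s _; rewrite ffunE mulr0. Qed.
Lemma ipMnr u n v : ip u (v *+ n) = ip u v *+ n.
Proof. by elim: n => [|n IH]; rewrite ?mulr0n ?ip0r // !mulrS ipDr IH. Qed.
Lemma ip_sumr u I (r : seq I) (P : pred I) (F : I -> vec) :
  ip u (\sum_(i <- r | P i) F i) = \sum_(i <- r | P i) ip u (F i).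
Proof.
elim/big_rec2: _ => [|i a b Pi <-]; first by rewrite ip0r.
by rewrite ipDr.
Qed.
Lemma ipC u v : ip v u = (ip u v)^*.
Proof.
by rewrite /ip rmorph_sum; apply: eq_bigr => s _; rewrite rmorphM /= conjCK mulrC.
Qed.
Lemma ip_suml u I (r : seq I) (P : pred I) (F : I -> vec) :
  ip (\sum_(i <- r | P i) F i) u = \sum_(i <- r | P i) ip (F i) u.
Proof. by rewrite ipC ip_sumr rmorph_sum; apply: eq_bigr => i _ /=; rewrite [RHS]ipC. Qed.

Definition nrm2 (v : vec) : K := \sum_s `|v s| ^+ 2.
Lemma nrm2E v : nrm2 v = ip v v.
Proof. by rewrite /nrm2 /ip; apply: eq_bigr => s _; rewrite normCKC. Qed.
Lemma nrm2_ge0 v : 0 <= nrm2 v.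
Proof. by apply: sumr_ge0 => s _; rewrite exprn_ge0. Qed.

Lemma herm_ip (X : op) u v : herm_op X -> ip (app X u) v = ip u (app X v).
Proof.
move=> hX; rewrite /ip.
under eq_bigr do rewrite ffunE rmorph_sum big_distrl.
rewrite exchange_big; apply: eq_bigr => t _ /=.
rewrite ffunE big_distrr; apply: eq_bigr => s _ /=.
by rewrite rmorphM /= hX conjCK mulrCA mulrA.
Qed.

Lemma ip_le u v : `|ip u v| <= nrm2 u + nrm2 v.
Proof.
rewrite /ip /nrm2 -big_split /=.
apply: le_trans (ler_norm_sum _ _ _) _; apply: ler_sum => s _.
rewrite normrM norm_conjC.
set a := `|u s|; set b := `|v s|.
have ha : 0 <= a by exact: normr_ge0. have hb : 0 <= b by exact: normr_ge0.
have : 0 <= (a - b) ^+ 2 by apply: real_exprn_even_ge0 => //; apply: realB; apply: ger0_real.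
rewrite sqrrB => h.
have h2 : a * b *+ 2 <= a ^+ 2 + b ^+ 2 by rewrite -subr_ge0 addrAC.
apply: le_trans h2; rewrite mulr2n lerDl; exact: mulr_ge0.
Qed.


Definition adj (X : op) : op := [ffun p => (X (p.2, p.1))^*].

Lemma herm_adj (X : op) : herm_op X -> adj X = X.
Proof. by move=> hX; apply/ffunP => -[s t]; rewrite ffunE /= -hX. Qed.
Lemma adj_herm (X : op) : adj X = X -> herm_op X.
Proof. by move=> hX s t; rewrite -{1}hX ffunE. Qed.
Lemma adjK (X : op) : adj (adj X) = X.
Proof. by apply/ffunP => -[s t]; rewrite !ffunE /= conjCK. Qed.
Lemma adj_mulo (X Y : op) : adj (mulo X Y) = mulo (adj Y) (adj X).
Proof.
apply/ffunP => -[s t]; rewrite !ffunE /= rmorph_sum; apply: eq_bigr => u _.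
by rewrite !ffunE /= rmorphM mulrC.
Qed.
Lemma adjD (X Y : op) : adj (X + Y) = adj X + adj Y.
Proof. by apply/ffunP => -[s t]; rewrite !ffunE /= rmorphD. Qed.
Lemma adjN (X : op) : adj (- X) = - adj X.
Proof. by apply/ffunP => -[s t]; rewrite !ffunE /= rmorphN. Qed.
Lemma adj0 : adj 0 = 0.
Proof. by apply/ffunP => -[s t]; rewrite !ffunE /= rmorph0. Qed.
Lemma adj1 : adj ido = ido.
Proof. by apply/ffunP => -[s t]; rewrite !ffunE /= eq_sym; case: (_ == _); rewrite /= ?rmorph0 ?rmorph1. Qed.

Lemma herm_mulo (X Y : op) : herm_op X -> herm_op Y -> mulo X Y = mulo Y X ->
  herm_op (mulo X Y).
Proof. by move=> hX hY c; apply: adj_herm; rewrite adj_mulo !herm_adj. Qed.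
Lemma herm_add (X Y : op) : herm_op X -> herm_op Y -> herm_op (X + Y).
Proof. by move=> hX hY; apply: adj_herm; rewrite adjD !herm_adj. Qed.
Lemma herm0 : herm_op (0 : op).
Proof. by apply: adj_herm; rewrite adj0. Qed.
Lemma herm1 : herm_op ido.
Proof. by apply: adj_herm; rewrite adj1. Qed.
Lemma herm_sub (X Y : op) : herm_op X -> herm_op Y -> herm_op (X - Y).
Proof. by move=> hX hY; apply: adj_herm; rewrite adjD adjN !herm_adj. Qed.
Lemma herm_sum I (r : seq I) (P : pred I) (F : I -> op) :
  (forall i, P i -> herm_op (F i)) -> herm_op (\sum_(i <- r | P i) F i).
Proof.
move=> h; elim/big_rec: _ => [|i x Pi hx]; first exact: herm0.
exact: herm_add (h _ Pi) hx.
Qed.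

Definition prodo (s : seq op) : op := foldr mulo ido s.

Lemma prodo_cat s1 s2 : prodo (s1 ++ s2) = mulo (prodo s1) (prodo s2).
Proof. by elim: s1 => [|x s IH] /=; rewrite ?mul1o // IH muloA. Qed.

Section Cone.
Variable fam : op -> Prop.
Hypothesis fam_proj : forall X, fam X -> herm_op X /\ mulo X X = X.
Hypothesis fam_comm : forall X Y, fam X -> fam Y -> mulo X Y = mulo Y X.

Definition allfam (s : seq op) := forall X, X \in s -> fam X.

Lemma allfam_cat s1 s2 : allfam s1 -> allfam s2 -> allfam (s1 ++ s2).
Proof. by move=> h1 h2 X; rewrite mem_cat => /orP [] ?; [apply: h1|apply: h2]. Qed.

Lemma prodo_comm1 s X : allfam s -> fam X -> mulo X (prodo s) = mulo (prodo s) X.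
Proof.
elim: s => [|Y s IH] hs hX /=; first by rewrite mul1o mulo1.
have hY : fam Y by apply: hs; rewrite inE eqxx.
have hs' : allfam s by move=> Z hZ; apply: hs; rewrite inE hZ orbT.
by rewrite -muloA (fam_comm hX hY) muloA IH // -muloA.
Qed.

Lemma prodo_comm s1 s2 : allfam s1 -> allfam s2 ->
  mulo (prodo s1) (prodo s2) = mulo (prodo s2) (prodo s1).
Proof.
elim: s1 => [|X s IH] h1 h2 /=; first by rewrite mul1o mulo1.
have hX : fam X by apply: h1; rewrite inE eqxx.
have hs : allfam s by move=> Z hZ; apply: h1; rewrite inE hZ orbT.
by rewrite (muloA X) IH // -(muloA X) (prodo_comm1 h2 hX) muloA.
Qed.

Lemma prodo_hp s : allfam s -> herm_op (prodo s) /\ mulo (prodo s) (prodo s) = prodo s.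
Proof.
elim: s => [|X s IH] h /=; first by split; [exact: herm1 | rewrite mulo1].
have hX : fam X by apply: h; rewrite inE eqxx.
have hs : allfam s by move=> Z hZ; apply: h; rewrite inE hZ orbT.
have [hXh hXp] := fam_proj hX; have [hsh hsp] := IH hs.
split; first by apply: herm_mulo => //; rewrite -prodo_comm1.
by rewrite (muloA X) -(muloA (prodo s) X) -(prodo_comm1 hs hX) (muloA X (prodo s)) hsp -(muloA X X) hXp.
Qed.

Inductive cone : op -> Prop :=
| cone0 : cone 0
| coneD X Y : cone X -> cone Y -> cone (X + Y)
| coneG s : allfam s -> cone (prodo s).

Lemma cone_fam X : fam X -> cone X.
Proof.
move=> hX; have := @coneG [:: X]; rewrite /= mulo1; apply.
by move=> Y; rewrite inE => /eqP ->.
Qed.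

Lemma coneMn X n : cone X -> cone (X *+ n).
Proof. by move=> hX; elim: n => [|n IH]; rewrite ?mulr0n ?mulrS; constructor. Qed.

Lemma cone_sum I (r : seq I) (P : pred I) (F : I -> op) :
  (forall i, P i -> cone (F i)) -> cone (\sum_(i <- r | P i) F i).
Proof. by move=> h; elim/big_rec: _ => [|i x Pi hx]; [constructor|constructor; auto]. Qed.

Lemma coneM X Y : cone X -> cone Y -> cone (mulo X Y).
Proof.
move=> hX; elim: hX Y => [|X1 X2 _ IH1 _ IH2|s hs] Y hY.
- by rewrite mul0o; constructor.
- by rewrite muloDl; constructor; auto.
- elim: hY => [|Y1 Y2 _ IH3 _ IH4|s2 hs2].
  + by rewrite mulo0; constructor.
  + by rewrite muloDr; constructor.
  + by rewrite -prodo_cat; constructor; apply: allfam_cat.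
Qed.

Lemma cone_herm X : cone X -> herm_op X.
Proof.
elim => [|X1 X2 _ h1 _ h2|s hs]; [exact: herm0|exact: herm_add|].
by case: (prodo_hp hs).
Qed.

Lemma cone_comm X Y : cone X -> cone Y -> mulo X Y = mulo Y X.
Proof.
move=> hX; elim: hX Y => [|X1 X2 _ IH1 _ IH2|s hs] Y hY.
- by rewrite mul0o mulo0.
- by rewrite muloDl muloDr IH1 // IH2.
- elim: hY => [|Y1 Y2 _ IH3 _ IH4|s2 hs2].
  + by rewrite mul0o mulo0.
  + by rewrite muloDl muloDr IH3 IH4.
  + exact: prodo_comm.
Qed.

Lemma cone_form X psi : cone X -> 0 <= ip psi (app X psi).
Proof.
elim => [|X1 X2 _ h1 _ h2|s hs]; first by rewrite app0 ip0r.
  by rewrite appD ipDr addr_ge0.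
have [hh hp] := prodo_hp hs.
by rewrite -hp app_mulo -herm_ip // -nrm2E nrm2_ge0.
Qed.

Lemma cone_mono X D psi : cone X -> cone D -> ip psi (app X psi) <= ip psi (app (X + D) psi).
Proof. by move=> hX hD; rewrite appD ipDr lerDl cone_form. Qed.

Lemma nrm2_herm X psi : herm_op X -> nrm2 (app X psi) = ip psi (app (mulo X X) psi).
Proof. by move=> hX; rewrite nrm2E herm_ip // app_mulo. Qed.

Lemma cone_sq_mono X D psi : cone X -> cone D -> nrm2 (app X psi) <= nrm2 (app (X + D) psi).
Proof.
move=> hX hD; have hx := cone_herm hX.
have hxd : herm_op (X + D) by apply: cone_herm; constructor.
rewrite !nrm2_herm //.
rewrite muloDl !muloDr -addrA; apply: cone_mono; first exact: coneM.
apply: coneD; first exact: coneM. by apply: coneD; apply: coneM => //; constructor.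
Qed.

End Cone.

End OpAlg.


Section Support.
Variables (K : numClosedFieldType) (L d : nat).
Local Notation vec := (vec K L d).
Local Notation op := (op K L d).
Local Notation mulo := (@mulo K L d).
Local Notation conf := (conf L d).

Definition mix (A : {set site L}) (s t : conf) : conf :=
  [ffun x => if x \in A then s x else t x].

Lemma agree_offP (A : {set site L}) (s t : conf) : reflect (forall x, x \notin A -> s x = t x) (agree_off A s t).
Proof.
apply: (iffP forallP) => h x.
  by move=> nx; have := h x; rewrite inE nx /= => /eqP.
by apply/implyP; rewrite inE => nx; apply/eqP; apply: h.
Qed.
Lemma agree_onP (A : {set site L}) (s t : conf) : reflect (forall x, x \in A -> s x = t x) (agree_on A s t).
Proof.
apply: (iffP forallP) => h x.
  by move=> nx; have := h x; rewrite nx /= => /eqP.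
by apply/implyP => nx; apply/eqP; apply: h.
Qed.

Lemma sum_single (f : conf -> K) u0 : (forall u, f u != 0 -> u = u0) ->
  \sum_u f u = f u0.
Proof.
move=> h; rewrite (bigD1 u0) //= big1 ?addr0 // => u ne.
by apply/eqP; apply: contraR ne => /h ->.
Qed.

Lemma supp_comm (A1 A2 : {set site L}) (X Y : op) : supported_on A1 X -> supported_on A2 Y ->
  A1 :&: A2 = set0 -> mulo X Y = mulo Y X.
Proof.
move=> [g1 [hX hg1]] [g2 [hY hg2]] dis.
have n12 x : x \in A1 -> x \notin A2.
  by move=> x1; apply/negP => x2; have := in_set0 x; rewrite -dis inE x1 x2.
apply/ffunP => -[s t]; rewrite !ffunE /=.
set u0 := mix A1 t s; set u1 := mix A2 t s.
rewrite (sum_single (u0 := u0)); last first.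
  move=> u; rewrite hX hY; case: (boolP (agree_off A1 s u)) => [/agree_offP h1|]; last by rewrite /= !mul0r eqxx.
  case: (boolP (agree_off A2 u t)) => [/agree_offP h2|]; last by rewrite /= mul0r mulr0 eqxx.
  move=> _; apply/ffunP => x; rewrite ffunE; case: ifP => xA1.
    by apply: h2; apply: n12.
  by rewrite h1 // xA1.
rewrite [RHS](sum_single (u0 := u1)); last first.
  move=> u; rewrite hX hY; case: (boolP (agree_off A2 s u)) => [/agree_offP h1|]; last by rewrite /= !mul0r eqxx.
  case: (boolP (agree_off A1 u t)) => [/agree_offP h2|]; last by rewrite /= mul0r mulr0 eqxx.
  move=> _; apply/ffunP => x; rewrite ffunE; case: ifP => xA2.
    by apply: h2; apply/negP => xA1; move: (n12 _ xA1); rewrite xA2.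
  by rewrite h1 // xA2.
rewrite hX hY hX hY.
have e1 : agree_off A1 s u0 by apply/agree_offP => x nx; rewrite ffunE (negbTE nx).
have e2 : agree_off A2 s u1 by apply/agree_offP => x nx; rewrite ffunE (negbTE nx).
have e3 : agree_off A2 u0 t = agree_off A1 u1 t.
  apply/agree_offP/agree_offP => h x nx; rewrite ffunE.
  - case: ifP => x2; first by [].
    by move: (h x); rewrite ffunE (negbTE nx) => -> //; rewrite x2.
  - case: ifP => x1; first by [].
    by move: (h x); rewrite ffunE (negbTE nx) => -> //; rewrite x1.
rewrite e1 e2 e3.
rewrite (hg1 s u1 u0 t); last 2 first.
  by apply/agree_onP => x x1; rewrite ffunE (negbTE (n12 _ x1)).
  by apply/agree_onP => x x1; rewrite ffunE x1.
rewrite (hg2 u0 s t u1); last 2 first.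
  by apply/agree_onP => x x2; rewrite ffunE; case: ifP => // x1; move: (n12 _ x1); rewrite x2.
  by apply/agree_onP => x x2; rewrite ffunE x2.
have ac (a b c e : K) : a * b * (c * e) = a * e * (c * b).
  by rewrite -!mulrA (mulrCA b) (mulrCA e) (mulrC e).
exact: ac.
Qed.

End Support.


Section Geo.
Local Open Scope nat_scope.
Variable L : nat.

Lemma count1 (Lpos : 0 < L) (e x p q : nat) :
  #|[set c : 'I_L | [exists i : 'I_p, exists j : 'I_q, (c + e + i) %% L == (x + j) %% L]]| <= p + q.
Proof.
pose h := fun k : 'I_(p+q) => Ordinal (ltn_pmod (x + k + L*(e+p) - (e+p)) Lpos).
apply: leq_trans (_ : #|h @: [set: 'I_(p+q)]| <= _); last first.
  by rewrite (leq_trans (leq_imset_card _ _)) // cardsT card_ord.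
apply: subset_leq_card; apply/subsetP => c; rewrite inE => /existsP [i /existsP [j /eqP hij]].
have ip : i <= p by apply: ltnW.
have kp : j + p - i < p + q.
  by rewrite -addnBA // addnC -addnS; apply: leq_add; [exact: leq_subr| exact: ltn_ord].
apply/imsetP; exists (Ordinal kp); first by rewrite inE.
apply: val_inj => /=.
rewrite -(modn_small (ltn_ord c)); apply/eqP; rewrite -(eqn_modDr (e+p)).
have LL : e + p <= L * (e + p) by rewrite leq_pmull.
rewrite subnK; last by rewrite (leq_trans LL) // leq_addl.
rewrite [x + _ + _]addnC [L * _]mulnC modnMDl.
have -> : c + (e + p) = (c + e + i) + (p - i) by rewrite -[RHS]addnA subnKC // addnA.
rewrite -modnDml hij modnDml -addnA addnBA //.
Qed.

Lemma block_meet (p q x y x' y' : nat) (s : site L) :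
  s \in block L p x y -> s \in block L q x' y' ->
  [exists i : 'I_p, exists j : 'I_q, (x + i) %% L == (x' + j) %% L] &&
  [exists i : 'I_p, exists j : 'I_q, (y + i) %% L == (y' + j) %% L].
Proof.
rewrite !inE => /existsP [i1 /existsP [j1 /andP [/eqP h1 /eqP h2]]].
move=> /existsP [i2 /existsP [j2 /andP [/eqP h3 /eqP h4]]].
apply/andP; split; apply/existsP.
  by exists i1; apply/existsP; exists i2; rewrite -h1 -h3.
by exists j1; apply/existsP; exists j2; rewrite -h2 -h4.
Qed.

Lemma count2 (Lpos : 0 < L) (e p q x y : nat) :
  #|[set c : site L | block L p (c.1 + e) (c.2 + e) :&: block L q x y != set0]| <= (p + q) ^ 2.
Proof.
set S1 := [set c : 'I_L | [exists i : 'I_p, exists j : 'I_q, (c + e + i) %% L == (x + j) %% L]].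
set S2 := [set c : 'I_L | [exists i : 'I_p, exists j : 'I_q, (c + e + i) %% L == (y + j) %% L]].
apply: leq_trans (_ : #|setX S1 S2| <= _).
  apply: subset_leq_card; apply/subsetP => c; rewrite inE => /set0Pn [s].
  rewrite inE => /andP [h1 h2]; have /andP [e1 e2] := block_meet h1 h2.
  by rewrite !inE e1 e2.
by rewrite cardsX expnS expn1 leq_mul // count1.
Qed.

End Geo.
Local Open Scope ring_scope.


Lemma shiftL L x y : (0 < L)%N -> (x + L - 1 + y.+1 = x + y + L)%N.
Proof. move/ssrnat.leP => h. rewrite -!plusE -!minusE. lia. Qed.

Section Fam.
Variables (K : numClosedFieldType) (L d : nat).
Local Notation vec := (vec K L d).
Local Notation op := (op K L d).
Local Notation mulo := (@mulo K L d).
Local Notation app := (@app K L d).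
Local Notation ido := (@ido K L d).
Variable Q : {set site L} -> op.
Hypothesis hQ : forall A, A \in squares L 2 -> proj_op (Q A) /\ supported_on A (Q A).
Hypothesis hcomm : forall A B, A \in squares L 2 -> B \in squares L 2 ->
       mulo (Q A) (Q B) = mulo (Q B) (Q A).

Definition fam (X : op) := exists2 a, a \in squares L 2 & (X = Q a \/ X = ido - Q a).

Lemma fam_proj X : fam X -> herm_op X /\ mulo X X = X.
Proof.
case=> a a2 [->|->]; have [[hh hp] _] := hQ a2; first by [].
split; first by apply: herm_sub => //; exact: herm1.
by rewrite muloBl !muloBr !mulo1 !mul1o hp subrr subr0.
Qed.

Lemma commB (X Y : op) : mulo X Y = mulo Y X -> mulo X (ido - Y) = mulo (ido - Y) X.
Proof. by move=> h; rewrite muloBr muloBl mulo1 mul1o h. Qed.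

Lemma fam_comm X Y : fam X -> fam Y -> mulo X Y = mulo Y X.
Proof.
case=> a a2 hX [b b2 hY]; have hab := hcomm a2 b2.
have hab' : mulo (ido - Q a) (Q b) = mulo (Q b) (ido - Q a) by rewrite (commB (esym hab)).
case: hX hY => -> [] ->; first exact: hab.
- exact: commB.
- exact: hab'.
- exact: commB.
Qed.

Definition sQ (s : seq {set site L}) : op := ido - prodo [seq ido - Q a | a <- s].
Definition sH (s : seq {set site L}) : op := \sum_(a <- s) Q a.

Lemma allfam_map s : all (mem (squares L 2)) s -> allfam fam [seq ido - Q a | a <- s].
Proof.
move=> /allP h X /mapP [a ain ->]; exists a; last by right.
exact: h.
Qed.

Lemma sQ_cone s : all (mem (squares L 2)) s ->
  cone fam (sQ s) /\ cone fam (sH s - sQ s).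
Proof.
elim: s => [|a s IH] /=.
  rewrite /sQ /sH big_nil /= subrr sub0r oppr0; split; exact: cone0.
move=> /andP [a2 hs]; have [c1 c2] := IH hs.
have qa : cone fam (Q a) by apply: cone_fam; exists a => //; left.
have e1 : sQ (a :: s) = sQ s + mulo (Q a) (prodo [seq ido - Q a | a <- s]).
  by rewrite /sQ /= muloBl mul1o opprB addrCA addrC.
have e2 : sH (a :: s) - sQ (a :: s) = (sH s - sQ s) + mulo (Q a) (sQ s).
  rewrite e1 /sH big_cons /sQ muloBr mulo1.
  by rewrite opprD [RHS]addrACA (addrC (\sum_(a0 <- s) Q a0)).
split.
  rewrite e1; apply: coneD => //.
  apply: (@coneG _ _ _ fam (Q a :: [seq ido - Q a | a <- s])) => X.
  rewrite inE => /orP [/eqP ->|]; first by exists a => //; left.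
  exact: allfam_map.
rewrite e2; apply: coneD => //; exact: (coneM qa c1).
Qed.



Lemma big_prodo (S : {set {set site L}}) (P : pred {set site L}) (F : {set site L} -> op) :
  \big[mulo/ido]_(a in S | P a) F a = prodo [seq F a | a <- [seq a <- index_enum _ | (a \in S) && P a]].
Proof.
rewrite -big_filter; elim: [seq a <- _ | _] => [|a s IH].
  by rewrite big_nil.
by rewrite big_cons IH.
Qed.

Lemma comm_prodo (X : op) s : (forall Y, Y \in s -> mulo X Y = mulo Y X) ->
  mulo X (prodo s) = mulo (prodo s) X.
Proof.
elim: s => [|Y s IH] h /=; first by rewrite mulo1 mul1o.
rewrite -(muloA X) (h Y (mem_head _ _)) (muloA Y) IH ?(muloA Y) //.
by move=> Z hZ; apply: h; rewrite inE hZ orbT.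
Qed.

Lemma sQ_proj s : all (mem (squares L 2)) s -> herm_op (sQ s) /\ mulo (sQ s) (sQ s) = sQ s.
Proof.
move=> hs; have [hh hp] := prodo_hp fam_proj fam_comm (allfam_map hs).
split; first by apply: herm_sub => //; exact: herm1.
by rewrite /sQ muloBl !muloBr !mulo1 !mul1o hp subrr subr0.
Qed.

Variables (Lstar r : nat) (w : K) (V : {set site L} -> op).
Hypothesis Lpos : (0 < L)%N.
Hypothesis hT2 : TQO2 Q Lstar.
Hypothesis hr : (r <= Lstar)%N.
Hypothesis hV : forall A, A \in squares L r ->
       herm_op (V A) /\ supported_on A (V A) /\
       mulo (V A) (Pgs Q) = 0 /\ mulo (Pgs Q) (V A) = 0 /\
       opnorm_le (V A) w.
Hypothesis w0 : 0 <= w.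

Definition corner (A : {set site L}) := [pick c : site L | A == block L r c.1 c.2].
Definition BA (A : {set site L}) : {set site L} :=
  if corner A is Some c then block L (r + 2) (c.1 + L - 1) (c.2 + L - 1) else set0.
Definition sB A := [seq a <- index_enum _ | (a \in squares L 2) && (a \subset BA A)].
Definition QB A := sQ (sB A).
Definition HB A := sH (sB A).

Lemma sB_ok A : all (mem (squares L 2)) (sB A).
Proof. by apply/allP => a; rewrite mem_filter => /andP [/andP []]. Qed.

Lemma corner_spec A : A \in squares L r -> exists c, corner A = Some c /\ A = block L r c.1 c.2.
Proof.
move=> hA; rewrite /corner; case: pickP => [c /eqP -> | h]; first by exists c.
by case/imsetP: hA => c _ e; have := h c; rewrite e eqxx.
Qed.

Lemma QB_hp A : herm_op (QB A) /\ mulo (QB A) (QB A) = QB A.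
Proof. exact: sQ_proj (sB_ok A). Qed.

Lemma QB_cone A : cone fam (QB A) /\ cone fam (HB A - QB A).
Proof. exact: sQ_cone (sB_ok A). Qed.

Lemma VQ A : A \in squares L r -> mulo (V A) (QB A) = V A /\ mulo (QB A) (V A) = V A.
Proof.
move=> hA; have [hh [hs [hP _]]] := hV hA.
have [c [ec eA]] := corner_spec hA.
have hs' : supported_on (block L r c.1 c.2) (V A) by rewrite -eA.
have h0 := hT2 hr hs' hP.
have eq1 : prodo [seq ido - Q a | a <- sB A] = PB Q (BA A) by rewrite /PB big_prodo.
have e1 : mulo (V A) (QB A) = V A.
  by rewrite /QB /sQ eq1 /BA ec muloBr mulo1 h0 subr0.
split => //.
have hq := (QB_hp A).1.
by rewrite -[LHS]adjK adj_mulo (herm_adj hh) (herm_adj hq) e1 (herm_adj hh).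
Qed.

Lemma A_sub_BA A : A \in squares L r -> A \subset BA A.
Proof.
move=> hA; have [c [ec eA]] := corner_spec hA.
rewrite /BA ec eA; apply/subsetP => s; rewrite !inE => /existsP [i /existsP [j /andP [h1 h2]]].
have i2 : (i.+1 < r + 2)%N by rewrite addn2 !ltnS ltnW.
have j2 : (j.+1 < r + 2)%N by rewrite addn2 !ltnS ltnW.
apply/existsP; exists (Ordinal i2); apply/existsP; exists (Ordinal j2) => /=.
by rewrite !shiftL // !modnDr h1 h2.
Qed.

Lemma far_comm A A' : A \in squares L r -> A' \in squares L r -> A' :&: BA A = set0 ->
  mulo (V A') (QB A) = mulo (QB A) (V A').
Proof.
move=> hA hA' dis; apply: commB; apply: comm_prodo => Y /mapP [a ain ->].
apply: commB; move: ain; rewrite mem_filter => /andP [/andP [a2 sub] _].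
have [_ [hs _]] := hV hA'; have [_ hsa] := hQ a2.
apply: (supp_comm hs hsa); apply/setP => x; rewrite !inE.
apply/negP => /andP [x1 x2]; have := in_set0 x; rewrite -dis inE x1 (subsetP sub) //.
Qed.

Lemma VV_comm A A' : A \in squares L r -> A' \in squares L r -> A' :&: BA A = set0 ->
  mulo (V A) (V A') = mulo (V A') (V A).
Proof.
move=> hA hA' dis; have [_ [hs _]] := hV hA; have [_ [hs' _]] := hV hA'.
apply: (supp_comm hs hs'); apply/setP => x; rewrite !inE.
apply/negP => /andP [x1 x2]; have := in_set0 x; rewrite -dis inE x2 (subsetP (A_sub_BA hA)) //.
Qed.


Definition far A A' := (A' :&: BA A == set0) && (A :&: BA A' == set0).

Lemma farC A A' : far A A' = far A' A.
Proof. by rewrite /far andbC. Qed.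

Lemma BA_eq A c : corner A = Some c ->
  BA A = block L (r + 2) (c.1 + (L - 1)) (c.2 + (L - 1)).
Proof. by move=> ec; rewrite /BA ec !addnBA. Qed.

Lemma cnt_imset (P : {set site L} -> bool) (Pc : site L -> bool) :
  (forall A c, A \in squares L r -> corner A = Some c -> A = block L r c.1 c.2 -> P A -> Pc c) ->
  (#|[set A in squares L r | P A]| <= #|[set c | Pc c]|)%N.
Proof.
move=> h; apply: leq_trans (leq_imset_card (fun c : site L => block L r c.1 c.2) _).
apply: subset_leq_card; apply/subsetP => A; rewrite inE => /andP [hA hP].
have [c [ec eA]] := corner_spec hA.
by apply/imsetP; exists c => //; rewrite inE; apply: h hP.
Qed.

Lemma near_count A : A \in squares L r ->
  (#|[set A' in squares L r | ~~ far A A']| <= 2 * (r + (r + 2)) ^ 2)%N.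
Proof.
move=> hA; have [c0 [ec0 eA]] := corner_spec hA.
set S1 := [set A' in squares L r | A' :&: BA A != set0].
set S2 := [set A' in squares L r | BA A' :&: A != set0].
apply: leq_trans (_ : (#|S1 :|: S2| <= _)%N).
  apply: subset_leq_card; apply/subsetP => A'; rewrite !inE negb_and => /andP [-> /=].
  by rewrite [BA A' :&: A]setIC.
rewrite cardsU mul2n -addnn; apply: leq_trans (leq_subr _ _) _; apply: leq_add.
  apply: leq_trans (cnt_imset (Pc := fun c => block L r (c.1 + 0) (c.2 + 0) :&: BA A != set0) _) _.
    by move=> A' c _ _ ->; rewrite !addn0.
  by rewrite (BA_eq ec0) count2.
apply: leq_trans (cnt_imset (Pc := fun c => block L (r + 2) (c.1 + (L - 1)) (c.2 + (L - 1)) :&: block L r c0.1 c0.2 != set0) _) _.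
  by move=> A' c _ ec _; rewrite -(BA_eq ec) -eA.
by rewrite [(r + (r + 2))%N]addnC count2.
Qed.

Lemma H_count a : a \in squares L 2 ->
  (#|[set A in squares L r | a \subset BA A]| <= (r + 2 + 1) ^ 2)%N.
Proof.
case/imsetP => a0 _ ea.
apply: leq_trans (cnt_imset (Pc := fun c => block L (r + 2) (c.1 + (L - 1)) (c.2 + (L - 1)) :&: block L 1 a0.1 a0.2 != set0) _) _; last by rewrite count2.
move=> A c _ ec _ sub; apply/set0Pn; exists a0.
have h1 : a0 \in block L 1 a0.1 a0.2.
  by rewrite inE; apply/existsP; exists ord0; apply/existsP; exists ord0; rewrite !addn0 !modn_small ?eqxx.
have h2 : a0 \in a.
  by rewrite ea inE; apply/existsP; exists ord0; apply/existsP; exists ord0; rewrite !addn0 !modn_small ?eqxx.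
by rewrite inE h1 -(BA_eq ec) (subsetP sub).
Qed.


Lemma sandwich (V1 V2 Q1 Q2 : op) :
  mulo V1 Q1 = V1 -> mulo Q1 V1 = V1 -> mulo V2 Q2 = V2 -> mulo Q2 V2 = V2 ->
  mulo V1 V2 = mulo V2 V1 -> mulo V1 Q2 = mulo Q2 V1 -> mulo V2 Q1 = mulo Q1 V2 ->
  mulo Q1 Q2 = mulo Q2 Q1 ->
  mulo V1 V2 = mulo (mulo Q1 Q2) (mulo (mulo V1 V2) (mulo Q1 Q2)).
Proof.
move=> a1 b1 a2 b2 c12 d1 d2 q12.
have r1 : mulo (mulo V1 V2) Q1 = mulo V1 V2 by rewrite muloA d2 -muloA a1.
have r2 : mulo (mulo V1 V2) Q2 = mulo V1 V2 by rewrite muloA a2.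
have l1 : mulo Q1 (mulo V1 V2) = mulo V1 V2 by rewrite -muloA b1.
have l2 : mulo Q2 (mulo V1 V2) = mulo V1 V2 by rewrite c12 -muloA b2.
by rewrite -(muloA (mulo V1 V2)) r1 r2 muloA l2 l1.
Qed.

Definition fo (psi : vec) (Y : op) := ip psi (app Y psi).

Lemma opnorm_nrm2 (X : op) u : opnorm_le X w -> nrm2 (app X u) <= w ^+ 2 * nrm2 u.
Proof.
move=> h; have := h u; rewrite /vnorm => hu.
have g1 : 0 <= sqrtC (nrm2 (app X u)) by rewrite sqrtC_ge0 nrm2_ge0.
have g2 : 0 <= w * sqrtC (nrm2 u) by rewrite mulr_ge0 // sqrtC_ge0 nrm2_ge0.
have := @lerXn2r _ 2 (sqrtC (nrm2 (app X u))) (w * sqrtC (nrm2 u)).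
rewrite !nnegrE => /(_ g1 g2 hu).
by rewrite exprMn !sqrtCK.
Qed.

Lemma hp_fo (Y : op) psi : herm_op Y -> mulo Y Y = Y -> nrm2 (app Y psi) = fo psi Y.
Proof. by move=> hh hp; rewrite nrm2_herm // hp. Qed.

Lemma nA_bound A psi : A \in squares L r -> nrm2 (app (V A) psi) <= w ^+ 2 * fo psi (QB A).
Proof.
move=> hA; have [e1 _] := VQ hA; have [hh hp] := QB_hp A.
have [_ [_ [_ [_ hn]]]] := hV hA.
by rewrite -e1 app_mulo -hp_fo //; apply: opnorm_nrm2.
Qed.

Lemma R_hp A A' : herm_op (mulo (QB A) (QB A')) /\
  mulo (mulo (QB A) (QB A')) (mulo (QB A) (QB A')) = mulo (QB A) (QB A').
Proof.
have [c1 _] := QB_cone A; have [c2 _] := QB_cone A'.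
have cm := cone_comm fam_comm c1 c2.
have [h1 p1] := QB_hp A; have [h2 p2] := QB_hp A'.
split; first exact: herm_mulo.
by rewrite (muloA (QB A)) -(muloA (QB A') (QB A)) -cm (muloA (QB A)) p2 -(muloA (QB A)) p1.
Qed.

Lemma far_ip A A' psi : A \in squares L r -> A' \in squares L r -> far A A' ->
  `|ip (app (V A) psi) (app (V A') psi)| <= w ^+ 2 * fo psi (mulo (QB A) (QB A')) *+ 2.
Proof.
move=> hA hA' /andP [/eqP f1 /eqP f2].
have [a1 b1] := VQ hA; have [a2 b2] := VQ hA'.
have [hh1 _] := hV hA; have [hh2 _] := hV hA'.
have [c1 _] := QB_cone A; have [c2 _] := QB_cone A'.
have [hR pR] := R_hp A A'.
set R := mulo (QB A) (QB A').
have e : ip (app (V A) psi) (app (V A') psi) = ip (app (V A) (app R psi)) (app (V A') (app R psi)).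
  rewrite !herm_ip // -!app_mulo.
  rewrite (sandwich a1 b1 a2 b2 (VV_comm hA hA' f1) (far_comm hA' hA f2) (far_comm hA hA' f1)
     (cone_comm fam_comm c1 c2)).
  by rewrite !muloA.
rewrite e; apply: le_trans (ip_le _ _) _.
have [_ [_ [_ [_ hn1]]]] := hV hA; have [_ [_ [_ [_ hn2]]]] := hV hA'.
rewrite mulr2n; apply: lerD; rewrite -hp_fo //; exact: opnorm_nrm2.
Qed.


Definition Xs := \sum_(A in squares L r) QB A.
Definition Mc := ((r + 2 + 1) ^ 2)%N.
Definition mcount (a : {set site L}) := #|[set A in squares L r | a \subset BA A]|.

Lemma sumHB : \sum_(A in squares L r) HB A = \sum_(a in squares L 2) Q a *+ mcount a.
Proof.
rewrite /HB /sH.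
under eq_bigr do rewrite /sB big_filter.
rewrite (exchange_big_dep (fun a => a \in squares L 2)) /=; last by move=> A a _ /andP [].
apply: eq_bigr => a a2.
rewrite -sumr_const /mcount; apply: eq_bigl => A.
by rewrite !inE a2.
Qed.

Lemma X_cone : cone fam Xs.
Proof. by apply: cone_sum => A _; case: (QB_cone A). Qed.

Lemma Q_cone a : a \in squares L 2 -> cone fam (Q a).
Proof. by move=> a2; apply: cone_fam; exists a => //; left. Qed.

Lemma H0_cone : cone fam (H0 Q).
Proof. by apply: cone_sum => a a2; apply: Q_cone. Qed.

Lemma XD : exists2 D, cone fam D & H0 Q *+ Mc = Xs + D.
Proof.
exists ((\sum_(A in squares L r) (HB A - QB A)) + \sum_(a in squares L 2) Q a *+ (Mc - mcount a)).
  apply: coneD; first by apply: cone_sum => A _; case: (QB_cone A).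
  by apply: cone_sum => a a2; apply: coneMn; apply: Q_cone.
rewrite addrA /Xs -big_split /=.
under eq_bigr do rewrite addrC subrK.
rewrite sumHB -big_split /= /H0 -sumrMnl.
apply: eq_bigr => a a2; rewrite -mulrnDr subnKC //.
apply: leq_trans (H_count a2) _; by [].
Qed.

Lemma H0sq : exists2 E, cone fam E & mulo (H0 Q) (H0 Q) = H0 Q + E.
Proof.
exists (\sum_(a in squares L 2) \sum_(b in squares L 2 | b != a) mulo (Q a) (Q b)).
  apply: cone_sum => a a2; apply: cone_sum => b /andP [b2 _].
  by apply: coneM; apply: Q_cone.
rewrite /H0 mulo_suml -big_split /=; apply: eq_bigr => a a2.
rewrite mulo_sumr (bigD1 a) //=; have [[_ hp] _] := hQ a2.
by rewrite hp.
Qed.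


Lemma fo_sum I (rr : seq I) (P : pred I) (F : I -> op) psi :
  fo psi (\sum_(i <- rr | P i) F i) = \sum_(i <- rr | P i) fo psi (F i).
Proof. by rewrite /fo app_sum ip_sumr. Qed.

Lemma fo_Mn (Y : op) m psi : fo psi (Y *+ m) = fo psi Y *+ m.
Proof. by rewrite /fo appMn ipMnr. Qed.

Lemma cnt_sum (P : pred {set site L}) (c : K) (k : nat) : 0 <= c ->
  (#|[set A | P A]| <= k)%N -> \sum_(A | P A) c <= c *+ k.
Proof.
move=> c0 hk; rewrite sumr_const; apply: ler_wpMn2l => //.
by apply: leq_trans hk; rewrite cardsE.
Qed.

Lemma H0_herm : herm_op (H0 Q).
Proof. exact: (@cone_herm _ _ _ fam fam_proj fam_comm _ H0_cone). Qed.

Lemma fX psi : fo psi Xs <= nrm2 (app (H0 Q) psi) *+ Mc.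
Proof.
have [D cD eD] := XD; have [E cE eE] := H0sq.
apply: le_trans (@cone_mono _ _ _ fam fam_proj fam_comm _ _ psi X_cone cD) _.
rewrite -eD appMn ipMnr; apply: ler_wMn2r.
rewrite nrm2_herm; last exact: H0_herm.
rewrite eE; apply: (@cone_mono _ _ _ fam fam_proj fam_comm) => //; exact: H0_cone.
Qed.

Lemma nXX psi : nrm2 (app Xs psi) <= nrm2 (app (H0 Q) psi) *+ (Mc * Mc).
Proof.
have [D cD eD] := XD.
apply: le_trans (@cone_sq_mono _ _ _ fam fam_proj fam_comm _ _ psi X_cone cD) _.
rewrite -eD nrm2_herm; last by apply: (@cone_herm _ _ _ fam fam_proj fam_comm); apply: coneMn H0_cone.
rewrite muloMnl muloMnr !appMn !ipMnr -mulrnA nrm2_herm //; exact: H0_herm.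
Qed.


Lemma main_bound psi :
  nrm2 (app (\sum_(A in squares L r) V A) psi) <=
  nrm2 (app (H0 Q) psi) * w ^+ 2 *+
    (2 * (2 * (r + (r + 2)) ^ 2) * Mc + 2 * (Mc * Mc)).
Proof.
set S := squares L r.
set N := nrm2 (app (H0 Q) psi).
set Kn := (2 * (r + (r + 2)) ^ 2)%N.
pose x A := app (V A) psi.
pose n A := nrm2 (x A).
have n0 A : 0 <= n A by exact: nrm2_ge0.
have w2 : 0 <= w ^+ 2 by exact: exprn_ge0.
have fR0 A A' : 0 <= fo psi (mulo (QB A) (QB A')).
  exact: (@cone_form _ _ _ fam fam_proj fam_comm _ psi (coneM (QB_cone A).1 (QB_cone A').1)).
have e1 : nrm2 (app (\sum_(A in S) V A) psi) = \sum_(A in S) \sum_(A' in S) ip (x A) (x A').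
  by rewrite app_sum nrm2E ip_suml; apply: eq_bigr => A _; rewrite ip_sumr.
have step1 : nrm2 (app (\sum_(A in S) V A) psi) <= \sum_(A in S) \sum_(A' in S) `|ip (x A) (x A')|.
  rewrite -(ger0_norm (nrm2_ge0 (app (\sum_(A in S) V A) psi))) e1.
  apply: le_trans (ler_norm_sum _ _ _) _; apply: ler_sum => A _; exact: ler_norm_sum.
have step2 A : A \in S -> \sum_(A' in S) `|ip (x A) (x A')| <=
   \sum_(A' in S | ~~ far A A') (n A + n A') +
   \sum_(A' in S) w ^+ 2 * fo psi (mulo (QB A) (QB A')) *+ 2.
  move=> hA; rewrite (bigID (far A)) /= addrC; apply: lerD.
    by apply: ler_sum => A' _; exact: ip_le.
  apply: le_trans (_ : \sum_(A' in S | far A A') w ^+ 2 * fo psi (mulo (QB A) (QB A')) *+ 2 <= _).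
    by apply: ler_sum => A' /andP [hA' hf]; exact: far_ip.
  rewrite [X in _ <= X](bigID (far A)) /= lerDl; apply: sumr_ge0 => A' _.
  by apply: mulrn_wge0; apply: mulr_ge0.
have near1 : \sum_(A in S) \sum_(A' in S | ~~ far A A') n A <= (\sum_(A in S) n A) *+ Kn.
  rewrite -sumrMnl; apply: ler_sum => A hA; apply: cnt_sum => //.
  exact: near_count.
have near2 : \sum_(A in S) \sum_(A' in S | ~~ far A A') n A' <= (\sum_(A in S) n A) *+ Kn.
  rewrite (exchange_big_dep (fun A' => A' \in S)) /=; last by move=> ? ? _ /andP [].
  rewrite -sumrMnl; apply: ler_sum => A' hA'.
  have -> : \sum_(i | (i \in S) && ((A' \in S) && ~~ far i A')) n A' =
            \sum_(i | (i \in S) && ~~ far A' i) n A'.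
    by apply: eq_bigl => A; rewrite hA' /= farC.
  apply: cnt_sum => //; exact: near_count.
have sn : \sum_(A in S) n A <= w ^+ 2 * (N *+ Mc).
  apply: le_trans (_ : \sum_(A in S) w ^+ 2 * fo psi (QB A) <= _).
    by apply: ler_sum => A hA; exact: nA_bound.
  by rewrite -mulr_sumr -fo_sum; apply: ler_wpM2l => //; exact: fX.
have eX : \sum_(A in S) \sum_(A' in S) fo psi (mulo (QB A) (QB A')) = nrm2 (app Xs psi).
  rewrite nrm2_herm; last exact: (@cone_herm _ _ _ fam fam_proj fam_comm _ X_cone).
  rewrite /Xs mulo_suml -/(fo psi _) fo_sum; apply: eq_bigr => A _; rewrite mulo_sumr fo_sum //.
have far_tot : \sum_(A in S) \sum_(A' in S) w ^+ 2 * fo psi (mulo (QB A) (QB A')) *+ 2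
     <= w ^+ 2 * (N *+ (Mc * Mc)) *+ 2.
  under eq_bigr do rewrite sumrMnl -mulr_sumr.
  rewrite sumrMnl -mulr_sumr eX; apply: ler_wMn2r; apply: ler_wpM2l => //; exact: nXX.
apply: le_trans step1 _.
have step3 : \sum_(A in S) \sum_(A' in S) `|ip (x A) (x A')| <=
   \sum_(A in S) (\sum_(A' in S | ~~ far A A') (n A + n A') +
   \sum_(A' in S) w ^+ 2 * fo psi (mulo (QB A) (QB A')) *+ 2).
  by apply: ler_sum => A hA; exact: step2.
apply: le_trans step3 _.
rewrite big_split /=.
under eq_bigr do rewrite big_split /=.
rewrite big_split /=.
apply: le_trans (lerD (lerD near1 near2) far_tot) _.
have hsn := ler_wMn2r Kn sn.
apply: le_trans (lerD (lerD hsn hsn) (lexx _)) _.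
rewrite !mulrnAr -!mulrnA mulrC -!mulrnDr.
apply: ler_wpMn2l; first by apply: mulr_ge0 => //; exact: nrm2_ge0.
apply/ssrnat.leP; rewrite -!multE -!plusE; nia.
Qed.

End Fam.


Theorem mainTheorem6 (K : numClosedFieldType) (d : nat) :
  exists Cst : K,
  forall (L Lstar : nat) (Q : {set site L} -> op K L d),
    (forall A, A \in squares L 2 -> proj_op (Q A) /\ supported_on A (Q A)) ->
    (forall A B, A \in squares L 2 -> B \in squares L 2 ->
       mulo (Q A) (Q B) = mulo (Q B) (Q A)) ->
    Pgs Q != 0 ->
    TQO1 Q Lstar -> TQO2 Q Lstar ->
  forall (r : nat), (1 <= r <= Lstar)%N ->
  forall (w : K) (V : {set site L} -> op K L d),
    0 <= w ->
    (forall A, A \in squares L r ->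
       herm_op (V A) /\ supported_on A (V A) /\
       mulo (V A) (Pgs Q) = 0 /\ mulo (Pgs Q) (V A) = 0 /\
       opnorm_le (V A) w) ->
  forall psi : vec K L d,
    vnorm (app (\sum_(A in squares L r) V A) psi)
      <= Cst * w * r%:R ^+ 2 * vnorm (app (H0 Q) psi).
Proof.
exists 40%:R.
move=> L Lstar Q hQ hcomm _ _ hT2 r /andP [r1 hr] w V w0 hV psi.
have c0 : 0 <= 40%:R * w * r%:R ^+ 2 :> K.
  by rewrite mulr_ge0 ?exprn_ge0 ?ler0n // mulr_ge0 ?ler0n.
have N0 : 0 <= vnorm (app (H0 Q) psi) by rewrite /vnorm sqrtC_ge0 -/(nrm2 _) nrm2_ge0.
case: (posnP L) => [L0 | Lpos].
  have -> : \sum_(A in squares L r) V A = 0.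
    apply: big_pred0 => A; apply/negbTE/negP => /imsetP [[c1 c2] _ _].
    by subst L; case: c1.
  rewrite app0 /vnorm big1 ?sqrtC0; first exact: mulr_ge0.
  by move=> s _; rewrite ffunE normr0 expr0n.
have hb := main_bound hQ hcomm Lpos hT2 hr hV w0 psi.
rewrite /vnorm -!/(nrm2 _).
set N := nrm2 (app (H0 Q) psi) in hb *.
set C := (2 * (2 * (r + (r + 2)) ^ 2) * Mc r + 2 * (Mc r * Mc r))%N in hb.
have hC : (C <= 1600 * r ^ 4)%N.
  rewrite /C /Mc; have r1' := ssrnat.leP r1.
  have a : (r + (r + 2) <= 4 * r)%N by apply/ssrnat.leP; rewrite -!multE -!plusE; lia.
  have b : (r + 2 + 1 <= 4 * r)%N by apply/ssrnat.leP; rewrite -!multE -!plusE; lia.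
  apply: leq_trans (_ : (2 * (2 * (4 * r) ^ 2) * (4 * r) ^ 2 + 2 * ((4 * r) ^ 2 * (4 * r) ^ 2) <= _)%N).
    by rewrite leq_add // ?leq_mul // ?leq_exp2r //.
  rewrite !(expnS, expn0) !muln1; apply/ssrnat.leP; rewrite -!multE -!plusE; nia.
have N0' : 0 <= N by exact: nrm2_ge0.
have hb2 : nrm2 (app (\sum_(A in squares L r) V A) psi) <= (40%:R * w * r%:R ^+ 2) ^+ 2 * N.
  apply: le_trans hb _.
  rewrite -mulr_natr mulrC.
  have eR : (40%:R * w * r%:R ^+ 2) ^+ 2 * N = ((1600 * r ^ 4)%N)%:R * (N * w ^+ 2) :> K.
    rewrite !exprMn -!natrX natrM -natrM -expnD.
    have ac (a b c e : K) : a * b * c * e = a * c * (e * b).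
      by rewrite -!mulrA; congr (_ * _); rewrite mulrCA (mulrC b).
    by rewrite ac.
  rewrite eR; apply: ler_wpM2r; first by apply: mulr_ge0 => //; exact: exprn_ge0.
  by rewrite ler_nat.
have := hb2; rewrite -(@ler_sqrtC _ (nrm2 _)) ?nnegrE ?nrm2_ge0 ?mulr_ge0 ?exprn_ge0 //.
by rewrite sqrtCM ?nnegrE ?exprn_ge0 // sqrCK.
Qed.
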